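(* Let $P$ be a partial order with bottom element, $T=\{1_\sigma:\sigma\in P\}$, $\hat T$ a Kripke subset of $T$, and $\hat T_0$ as below. Then $\hat T_0$ is a (Kripke) ordinal and $L_{\hat T_0}=\hat T_0$.
   Context: Kripke sets over a partial order $P$ are evaluated with standard Kripke semantics for set theory. For $\sigma\in P$, $1_\sigma$ is the Kripke set with $(1_\sigma)_\tau=\emptyset$ if $\tau\le\sigma$ and $(1_\sigma)_\tau=\{\emptyset\}$ if $\sigma<\tau$ or $\sigma\perp\tau$ (incompatible), with the only possible transition maps. A Kripke subset $\hat T$ of $T$ assigns to each node $\sigma$ a set $\hat T_\sigma\subseteq T$, increasing in $\sigma$, with identity transition maps. $\hat T_0$ is the Kripke set with $(\hat T_0)_\sigma=\hat T_\sigma\cup\{0\}$. An ordinal is a transitive set of transitive sets. $\mathrm{def}(X)$ is the set of subsets of $X$ definable over $X$ (first-order, parameters from $X$, truth evaluated in $X$, in the Kripke sense), and $L_\alpha=\bigcup_{\beta\in\alpha}\mathrm{def}(L_\beta)$. *)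

(* Defs.v *)
From Stdlib Require Import List.
Import ListNotations.


Section Kripke.
Variable P : Type.
Variable le : P -> P -> Prop.

(* Transition maps are the identity (elements persist upward),
   which is the case for every Kripke set occurring in the statement. *)
Inductive KSet : Type :=
  KS (I : Type) (el : I -> KSet) (pres : I -> P -> Prop).

Definition idx (X : KSet) : Type := let (I, _, _) := X in I.
Definition elt (X : KSet) : idx X -> KSet :=
  match X as X0 return idx X0 -> KSet with KS _ f _ => f end.
Definition presR (X : KSet) : idx X -> P -> Prop :=
  match X as X0 return idx X0 -> P -> Prop with KS _ _ d => d end.

(* X_sigma : element i is in X_sigma iff present at some node below sigma
   (so X_sigma is automatically increasing in sigma). *)
Definition inAt (X : KSet) (i : idx X) (s : P) : Prop :=
  exists r, le r s /\ presR X i r.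

Definition K0 : KSet := KS Empty_set (@Empty_set_rect (fun _ => KSet)) (fun _ _ => False).

Fixpoint keq (x y : KSet) (s : P) {struct x} : Prop :=
  match x, y with
  | KS Ix f d, KS Jx g e =>
      forall t, le s t ->
        (forall i, (exists r, le r t /\ d i r) ->
           exists j, (exists r, le r t /\ e j r) /\ keq (f i) (g j) t) /\
        (forall j, (exists r, le r t /\ e j r) ->
           exists i, (exists r, le r t /\ d i r) /\ keq (f i) (g j) t)
  end.

Definition kin (s : P) (x Y : KSet) : Prop :=
  exists j, inAt Y j s /\ keq x (elt Y j) s.

(* first-order formulas of set theory, de Bruijn variables *)
Inductive form : Type :=
| fmem : nat -> nat -> form
| feq : nat -> nat -> form
| fbot : form
| fand : form -> form -> form
| forr : form -> form -> form
| fimp : form -> form -> form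
| fall : form -> form
| fex : form -> form.

Fixpoint bnd (n : nat) (f : form) : Prop :=
  match f with
  | fmem a b | feq a b => a < n /\ b < n
  | fbot => True
  | fand f1 f2 | forr f1 f2 | fimp f1 f2 => bnd n f1 /\ bnd n f2
  | fall f1 | fex f1 => bnd (S n) f1
  end.

(* Kripke forcing, quantifiers ranging over the domain D (D t = the
   elements of the domain at node t). *)
Fixpoint force (D : P -> KSet -> Prop) (f : form) (e : list KSet) (s : P)
  : Prop :=
  match f with
  | fmem a b => kin s (nth a e K0) (nth b e K0)
  | feq a b => keq (nth a e K0) (nth b e K0) s
  | fbot => False
  | fand f1 f2 => force D f1 e s /\ force D f2 e s
  | forr f1 f2 => force D f1 e s \/ force D f2 e s
  | fimp f1 f2 => forall t, le s t -> force D f1 e t -> force D f2 e t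
  | fall f1 => forall t, le s t -> forall x, D t x -> force D f1 (x :: e) t
  | fex f1 => exists x, D s x /\ force D f1 (x :: e) s
  end.

Definition Vdom : P -> KSet -> Prop := fun _ _ => True.
Definition domOf (X : KSet) : P -> KSet -> Prop :=
  fun t x => exists i, inAt X i t /\ x = elt X i.

(* "x is transitive" for x = variable k *)
Definition fTrans (k : nat) : form :=
  fall (fimp (fmem 0 (S k)) (fall (fimp (fmem 0 1) (fmem 0 (S (S k)))))).
(* Ord(x) for x = variable 0: a transitive set of transitive sets *)
Definition fOrd : form := fand (fTrans 0) (fall (fimp (fmem 0 1) (fTrans 0))).

Definition isKOrdinal (X : KSet) : Prop := forall s, force Vdom fOrd [X] s.

(* def(X): at node s, the subsets {x in X | X |= phi(x, p)} with phi a
   formula whose free variables are among x, p_1..p_n and p_i in X_s. *)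
Definition defSub (X : KSet) (f : form) (ps : list (idx X)) : KSet :=
  KS (idx X) (elt X) (fun i t => inAt X i t /\
                         force (domOf X) f (elt X i :: map (elt X) ps) t).

Definition kdef (X : KSet) : KSet :=
  KS (form * list (idx X)) (fun q : form * list (idx X) => defSub X (fst q) (snd q))
     (fun q s => bnd (S (length (snd q))) (fst q) /\
                 Forall (fun p => inAt X p s) (snd q)).

(* L_alpha = union over beta in alpha of def(L_beta) *)
Fixpoint KL (a : KSet) : KSet :=
  match a with
  | KS Ix f d =>
      KS {i : Ix & idx (kdef (KL (f i)))} (fun q : {i : Ix & idx (kdef (KL (f i)))} =>
            elt (kdef (KL (f (projT1 q)))) (projT2 q))
         (fun q s => (exists r, le r s /\ d (projT1 q) r) /\
                     inAt (kdef (KL (f (projT1 q)))) (projT2 q) s)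
  end.

(* 1_rho: empty at nodes t <= rho, {0} elsewhere *)
Definition one (rho : P) : KSet := KS unit (fun _ : unit => K0) (fun _ t => ~ le t rho).

(* hat T_0 for a Kripke subset hat T of T = {1_rho}, given as the predicate
   Th s rho  <->  1_rho in hat T_s *)
Definition That0 (Th : P -> P -> Prop) : KSet :=
  KS (option P) (fun o : option P => match o with None => K0 | Some r => one r end)
     (fun o s => match o with None => True | Some r => Th s r end).

End Kripke.

(* Main.v *)
Require Import Defs.
From Stdlib Require Import List Classical.

Lemma keq_intro (P : Type) (le : P -> P -> Prop) (a b : KSet P) s :
  (forall t, le s t ->
    (forall i, inAt P le a i t -> exists j, inAt P le b j t /\ keq P le (elt P a i) (elt P b j) t) /\
    (forall j, inAt P le b j t -> exists i, inAt P le a i t /\ keq P le (elt P a i) (elt P b j) t)) ->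
  keq P le a b s.
Proof. destruct a, b; simpl; exact (fun H => H). Qed.

Lemma keq_fwd (P : Type) (le : P -> P -> Prop) (a b : KSet P) s t i :
  keq P le a b s -> le s t -> inAt P le a i t ->
  exists j, inAt P le b j t /\ keq P le (elt P a i) (elt P b j) t.
Proof. destruct a, b; simpl; intros H H1 H2. apply (H t H1). exact H2. Qed.

Definition EI (P : Type) (x : KSet P) := idx P x -> False.

Lemma EI_keq (P : Type) (le : P -> P -> Prop) (a b : KSet P) s :
  EI P a -> EI P b -> keq P le a b s.
Proof. intros Ha Hb. apply keq_intro. intros t _. split; intros i _; [destruct (Ha i)|destruct (Hb i)]. Qed.

Definition nul (P : Type) (le : P -> P -> Prop) (x : KSet P) s :=
  forall t, le s t -> forall i, ~ inAt P le x i t.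

Lemma keq_nul (P : Type) (le : P -> P -> Prop) (le_trans : forall s t u, le s t -> le t u -> le s u)
  (a b : KSet P) s : keq P le a b s -> nul P le b s -> nul P le a s.
Proof. intros H Hb t Ht i Hi. destruct (keq_fwd P le a b s t i H Ht Hi) as [j [Hj _]].
  exact (Hb t Ht j Hj). Qed.

Lemma nul_keq (P : Type) (le : P -> P -> Prop) (le_trans : forall s t u, le s t -> le t u -> le s u)
  (a b : KSet P) s : nul P le a s -> nul P le b s -> keq P le a b s.
Proof. intros Ha Hb. apply keq_intro. intros t Ht. split; intros i Hi;
  [destruct (Ha t Ht i Hi)|destruct (Hb t Ht i Hi)]. Qed.

Lemma K0_nul (P : Type) (le : P -> P -> Prop) s : nul P le (K0 P) s.
Proof. intros t _ i. destruct i. Qed.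

Lemma elt_elt_That0 (P : Type) (le : P -> P -> Prop) Th j k :
  elt P (elt P (That0 P le Th) j) k = K0 P.
Proof. destruct j; simpl in *; [reflexivity | destruct k]. Qed.

Lemma part1 (P : Type) (le : P -> P -> Prop) (le_refl : forall s, le s s)
  (le_trans : forall s t u, le s t -> le t u -> le s u) Th :
  isKOrdinal P le (That0 P le Th).
Proof.
  intro s. simpl. split.
  - intros t Hst x _ t1 Ht1 [j [Hj Hxj]] t2 Ht2 z _ t3 Ht3 [i [Hi Hzi]].
    destruct (keq_fwd _ _ _ _ _ t3 i Hxj (le_trans _ _ _ Ht2 Ht3) Hi) as [j' [Hj' Hk]].
    rewrite elt_elt_That0 in Hk.
    exists None. split. { exists t3. split; [apply le_refl| exact I]. }
    simpl elt.
    apply nul_keq; auto; [|apply K0_nul].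
    apply (keq_nul _ _ le_trans _ _ _ Hzi).
    apply (keq_nul _ _ le_trans _ _ _ Hk). apply K0_nul.
  - intros t Hst y _ t1 Ht1 [j [Hj Hyj]] t2 Ht2 x _ t3 Ht3 [i [Hi Hxi]] t4 Ht4 z _ t5 Ht5 [i' [Hi' _]].
    destruct (keq_fwd _ _ _ _ _ t3 i Hyj (le_trans _ _ _ Ht2 Ht3) Hi) as [j' [Hj' Hk]].
    rewrite elt_elt_That0 in Hk.
    assert (Hn : nul P le x t3).
    { apply (keq_nul _ _ le_trans _ _ _ Hxi). apply (keq_nul _ _ le_trans _ _ _ Hk). apply K0_nul. }
    destruct (Hn t5 (le_trans _ _ _ Ht4 Ht5) i' Hi').
Qed.

Lemma EI_kin (P : Type) (le : P -> P -> Prop) s x y : EI P y -> ~ kin P le s x y.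
Proof. intros H [j _]. exact (H j). Qed.

Lemma nth_EI (P : Type) (e : list (KSet P)) a :
  Forall (EI P) e -> EI P (nth a e (K0 P)).
Proof. intro H. revert a; induction H; intros [|a]; simpl; auto; intros []. Qed.

Lemma KL1_EI (P : Type) (le : P -> P -> Prop) r k : EI P (elt P (KL P le (one P le r)) k).
Proof. intro x. destruct k as [u q]. simpl in x. destruct x as [[] _]. Qed.

Lemma KL1_good (P : Type) (le : P -> P -> Prop) (le_trans : forall s t u, le s t -> le t u -> le s u) r k t :
  inAt P le (KL P le (one P le r)) k t -> ~ le t r.
Proof. intros [r1 [Hr1 [[r2 [Hr2 Hg]] _]]] Ht. apply Hg. eauto. Qed.

Definition k1 (P : Type) (le : P -> P -> Prop) r : idx P (KL P le (one P le r)) :=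
  existT _ tt (fbot, nil).

Lemma KL1_pres (P : Type) (le : P -> P -> Prop) (le_refl : forall s, le s s) r t :
  ~ le t r -> inAt P le (KL P le (one P le r)) (k1 P le r) t.
Proof. intro H. exists t. split; [auto|]. split. exists t; auto.
  exists t. split; [auto|]. simpl. split; auto. Qed.

Lemma inv (P : Type) (le : P -> P -> Prop) (le_refl : forall s, le s s)
  (le_trans : forall s t u, le s t -> le t u -> le s u) r f :
  forall e e' t t', Forall (EI P) e -> Forall (EI P) e' -> ~ le t r -> ~ le t' r ->
  force P le (domOf P le (KL P le (one P le r))) f e t ->
  force P le (domOf P le (KL P le (one P le r))) f e' t'.
Proof.
  assert (Hgood : forall t t', le t t' -> ~ le t r -> ~ le t' r) by eauto.
  assert (Hdom : forall t x, domOf P le (KL P le (one P le r)) t x -> EI P x).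
  { intros t x [i [_ ->]]. apply KL1_EI. }
  assert (Hne : forall t, ~ le t r -> domOf P le (KL P le (one P le r)) t (elt P _ (k1 P le r))).
  { intros t Ht. exists (k1 P le r). split; auto. apply KL1_pres; auto. }
  induction f; intros e e' t t' He He' Ht Ht'; simpl.
  - intro H. destruct (EI_kin _ _ _ _ _ (nth_EI _ e n0 He) H).
  - intros _. apply EI_keq; apply nth_EI; auto.
  - auto.
  - intros [H1 H2]. split; [apply (IHf1 e e' t)|apply (IHf2 e e' t)]; auto.
  - intros [H1|H2]; [left; apply (IHf1 e e' t)|right; apply (IHf2 e e' t)]; auto.
  - intros H u Hu H1. assert (Hu' : ~ le u r) by eauto.
    apply (IHf2 e e' t); auto. apply H; auto. apply (IHf1 e' e u); auto.
  - intros H u Hu x Hx. assert (Hu' : ~ le u r) by eauto.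
    apply (IHf (elt P _ (k1 P le r) :: e) (x :: e') t); auto.
    + constructor; auto. apply KL1_EI.
    + constructor; eauto.
  - intros [x [Hx H]]. exists (elt P _ (k1 P le r)). split; auto.
    apply (IHf (x :: e) _ t); auto; constructor; eauto; apply KL1_EI.
Qed.

Lemma part2 (P : Type) (le : P -> P -> Prop) (le_refl : forall s, le s s)
  (le_trans : forall s t u, le s t -> le t u -> le s u) Th s :
  keq P le (KL P le (That0 P le Th)) (That0 P le Th) s.
Proof.
  apply keq_intro. intros t Hst. split.
  - intros [[r|] [phi ps]] Hq.
    + change (list (idx P (KL P le (one P le r)))) in ps.
      destruct Hq as [r0 [Hr0 [[r1 [Hr1 HTh]] _]]].
      change (exists j : idx P (That0 P le Th), inAt P le (That0 P le Th) j t /\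
        keq P le (defSub P le (KL P le (one P le r)) phi ps) (elt P (That0 P le Th) j) t).
      assert (HE : forall k, Forall (EI P) (elt P (KL P le (one P le r)) k :: map (elt P (KL P le (one P le r))) ps)).
      { intro k. constructor. apply KL1_EI. apply Forall_forall. intros x Hx.
        apply in_map_iff in Hx. destruct Hx as [k' [<- _]]. apply KL1_EI. }
      destruct (classic (exists t1 i, inAt P le (KL P le (one P le r)) i t1 /\
        force P le (domOf P le (KL P le (one P le r))) phi
          (elt P (KL P le (one P le r)) i :: map (elt P (KL P le (one P le r))) ps) t1)) as [HA|HnA].
      * exists (Some r). split. { exists r1. split; eauto. }
        apply keq_intro. intros t' Ht'. split.
        -- intros i [r2 [Hr2 [Hi Hf]]]. exists tt. split.
           ++ exists r2. split; auto. eapply KL1_good; eauto.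
           ++ apply EI_keq. apply KL1_EI. intros [].
        -- intros j [r3 [Hr3 Hg]].
           assert (Hg' : ~ le t' r) by eauto.
           exists (k1 P le r). split.
           ++ exists t'. split; auto. split. apply KL1_pres; auto.
              destruct HA as [t1 [i [Hi Hf]]].
              apply (inv P le le_refl le_trans r phi _ _ t1 t' (HE i) (HE _)); auto.
              eapply KL1_good; eauto.
           ++ apply EI_keq. apply KL1_EI. intros [].
      * exists None. split. { exists t. split; auto. exact I. }
        apply keq_intro. intros t' Ht'. split.
        -- intros i [r2 [Hr2 [Hi Hf]]]. exfalso. apply HnA. exists r2, i. auto.
        -- intros [].
    + exists None. split. { exists t. split; [auto|exact I]. }
      apply EI_keq. { simpl. intros [[] _]. } intros [].
  - intros [r|] Ho.
    + destruct Ho as [r1 [Hr1 HTh]].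
      exists (existT _ (Some r) (fimp fbot fbot, nil)). split.
      * exists t. split; auto. split. { exists r1; auto. }
        exists t. split; auto. simpl. auto.
      * change (keq P le (defSub P le (KL P le (one P le r)) (fimp fbot fbot) nil) (one P le r) t).
        apply keq_intro. intros t' Ht'. split.
        -- intros i [r2 [Hr2 [Hi Hf]]]. exists tt. split.
           ++ exists r2. split; auto. eapply KL1_good; eauto.
           ++ apply EI_keq. apply KL1_EI. intros [].
        -- intros j [r3 [Hr3 Hg]].
           assert (Hg' : ~ le t' r) by eauto.
           exists (k1 P le r). split.
           ++ exists t'. split; auto. split. apply KL1_pres; auto.
              simpl. auto.
           ++ apply EI_keq. apply KL1_EI. intros [].
    + exists (existT _ None (fbot, nil)). split.
      * exists t. split; auto. split. { exists t; split; auto. exact I. }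
        exists t. split; auto. simpl. auto.
      * apply EI_keq. { simpl. intros [[] _]. } intros [].
Qed.

Theorem mainTheorem10 (P : Type) (le : P -> P -> Prop) (bot : P)
  (le_refl : forall s, le s s)
  (le_trans : forall s t u, le s t -> le t u -> le s u)
  (le_antisym : forall s t, le s t -> le t s -> s = t)
  (bot_least : forall s, le bot s)
  (Th : P -> P -> Prop)
  (Th_incr : forall s t r, le s t -> Th s r -> Th t r) :
  isKOrdinal P le (That0 P le Th) /\
  (forall s, keq P le (KL P le (That0 P le Th)) (That0 P le Th) s).
Proof.
  split.
  - apply part1; auto.
  - intro s. apply part2; auto.
Qed.
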